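(* Let $F$ be a bipartite graph or an odd cycle. For every $\delta>0$ there exists $\varepsilon>0$ such that for all sufficiently large $n$, every $n$-vertex graph $G$ containing no copy of $F^{\triangle}$ and having at least $n^2/4-\varepsilon n^2$ edges can be made bipartite by removing at most $\delta n^2$ edges. In particular, every $n$-vertex graph $G$ containing no copy of $F^{\triangle}$ satisfies $|G|\le n^2/4+o(n^2)$.
   Context: $|G|$ is the number of edges of $G$. The $\triangle$-blowup $F^{\triangle}$ of a graph $F$ is obtained by replacing each edge $uv$ by a triangle $uvw_{uv}$ with a new vertex $w_{uv}$, distinct edges receiving distinct new vertices. *)

(* Defs.v *)
From HB Require Import structures.
From mathcomp Require Import all_boot all_order all_algebra.
From mathcomp Require Import reals.
Set Implicit Arguments. Unset Strict Implicit. Unset Printing Implicit Defensive.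
Import Order.TTheory GRing.Theory Num.Theory.

Definition simple_graph (V : finType) (e : rel V) : Prop :=
  (forall x y, e x y = e y x) /\ (forall x, ~~ e x x).

Definition num_edges (n : nat) (e : rel 'I_n) : nat :=
  #|[set p : 'I_n * 'I_n | e p.1 p.2 && (p.1 < p.2)%N]|.

Definition bipartite (V : finType) (e : rel V) : Prop :=
  exists c : V -> bool, forall x y, e x y -> c x != c y.

Definition cycle_rel (k : nat) : rel 'I_k :=
  fun i j => (j == (i.+1 %% k)%N :> nat) || (i == (j.+1 %% k)%N :> nat).

Definition odd_cycle (V : finType) (e : rel V) : Prop :=
  exists k : nat, [/\ odd k, (3 <= k)%N &
    exists f : 'I_k -> V, bijective f /\ forall i j, e (f i) (f j) = cycle_rel i j].

Definition edge_sets (V : finType) (e : rel V) : {set {set V}} :=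
  [set E : {set V} | [exists u, exists v, e u v && (E == [set u; v])]].

Definition blowup_vertex (V : finType) (e : rel V) : finType :=
  (V + {E : {set V} | E \in edge_sets e})%type.

(* The triangle blowup F^triangle: each edge uv of F becomes a triangle
   u v w_uv with a new vertex w_uv. *)
Definition blowup_rel (V : finType) (e : rel V) : rel (blowup_vertex e) :=
  fun a b =>
    match a, b with
    | inl u, inl v => e u v
    | inl u, inr E => u \in val E
    | inr E, inl u => u \in val E
    | inr _, inr _ => false
    end.

Definition contains_copy (U W : finType) (eH : rel U) (eG : rel W) : Prop :=
  exists f : U -> W, injective f /\ forall x y, eH x y -> eG (f x) (f y).
Arguments blowup_rel {V} e.
Arguments edge_sets {V} e.

(* Main.v *)
Require Import Defs.
From HB Require Import structures.
From mathcomp Require Import all_boot all_order all_algebra.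
From mathcomp Require Import reals.
From mathcomp Require Import zify.
From mathcomp Require Import ring lra.
Import Order.TTheory GRing.Theory Num.Theory.
Set Implicit Arguments. Unset Strict Implicit. Unset Printing Implicit Defensive.

Lemma expn_mono a b k : b <= a -> b ^ k <= a ^ k.
Proof. by case: k => [//|k] h; rewrite leq_exp2r. Qed.

Lemma pm_pair a b k : a^k * b + b^k * a <= a^k * a + b^k * b.
Proof.
wlog le: a b / b <= a.
  move=> H; case: (leqP b a) => h; first exact: H.
  rewrite addnC [X in _ <= X]addnC; apply: H; exact: ltnW.
have := expn_mono k le; move: (a^k) (b^k) => X Y h; nia.
Qed.

Lemma sum_sym2 (I : finType) (X : I -> nat) :
  \sum_u \sum_v (X u + X v) = 2 * (#|I| * \sum_i X i).
Proof.
rewrite (eq_bigr (fun u => #|I| * X u + \sum_v X v)); last first.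
  by move=> u _; rewrite big_split /= sum_nat_const cardT.
by rewrite big_split /= sum_nat_const -big_distrr /= cardT mul2n addnn.
Qed.

Lemma chebyshev (I : finType) (D : I -> nat) k :
  (\sum_i D i ^ k) * (\sum_i D i) <= #|I| * \sum_i D i ^ k.+1.
Proof.
rewrite -leq_double -!mul2n.
have E1 : 2 * (#|I| * \sum_i D i ^ k.+1) =
   \sum_u \sum_v (D u ^ k * D u + D v ^ k * D v).
  by rewrite -sum_sym2; apply: eq_bigr => u _; apply: eq_bigr => v _; rewrite !expnSr.
have E2 : 2 * ((\sum_i D i ^ k) * (\sum_i D i)) =
   \sum_u \sum_v (D u ^ k * D v + D v ^ k * D u).
  apply/esym; rewrite (eq_bigr (fun u => D u ^ k * \sum_v D v + (\sum_v D v ^ k) * D u)); last first.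
    by move=> u _; rewrite big_split /= big_distrr big_distrl.
  by rewrite big_split /= -big_distrl -big_distrr /= mulnC mul2n addnn.
rewrite E1 E2; apply: leq_sum => u _; apply: leq_sum => v _; exact: pm_pair.
Qed.

Lemma power_mean (I : finType) (D : I -> nat) k :
  (\sum_i D i) ^ k.+1 <= #|I| ^ k * \sum_i D i ^ k.+1.
Proof.
elim: k => [|k IH]; first by rewrite expn0 mul1n expn1; apply: leq_sum => i _; rewrite expn1.
rewrite expnS.
apply: (leq_trans (leq_mul (leqnn _) IH)).
have := chebyshev D k.+1.
move: (\sum_i D i) (\sum_i D i ^ k.+1) (\sum_i D i ^ k.+2) (#|I|) => a b c m h.
rewrite expnSr -mulnA; rewrite mulnCA leq_mul2l; apply/orP; right; by rewrite mulnC.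
Qed.

Lemma succ_pow a k : (a.+1) ^ k.+1 <= a ^ k.+1 + k.+1 * a.+1 ^ k.
Proof.
elim: k => [|k IH]; first by rewrite !expn1 expn0; lia.
rewrite expnS (expnS a).
have h1 : a.+1 * a.+1 ^ k.+1 <= a.+1 * (a ^ k.+1 + k.+1 * a.+1 ^ k) by rewrite leq_mul2l IH orbT.
apply: (leq_trans h1).
have h2 : a ^ k.+1 <= a.+1 ^ k.+1 by apply: expn_mono.
rewrite (expnS a.+1 k) in h2 *.
move: h2; move: (a ^ k.+1) (a.+1 ^ k) => X Y h2; nia.
Qed.

Lemma ffact_bound n k : n ^ k.+1 <= n ^_ k.+1 + k.+1 * k.+1 * n ^ k.
Proof.
elim: k n => [|k IH] [|n]; rewrite ?ffactn1 ?expn1 ?expn0 //.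
  by lia.
rewrite ffactSS.
have h1 := IH n.
have h2 := succ_pow n k.
have h3 : n ^ k <= n.+1 ^ k by apply: expn_mono.
set F := n ^_ k.+1 in h1 *.
have e1 : n.+1 ^ k.+2 = n.+1 * n.+1 ^ k.+1 by rewrite expnS.
have e2 : n ^ k.+1 = n * n ^ k by rewrite expnS.
have e3 : n.+1 ^ k.+1 = n.+1 * n.+1 ^ k by rewrite expnS.
rewrite e1; rewrite e2 e3 in h2; rewrite e2 in h1; rewrite e3.
move: h1 h2 h3; move: (n ^ k) (n.+1 ^ k) F => X Y Z h1 h2 h3.
have h4 : n.+1 * (n.+1 * Y) <= n.+1 * (n * X + k.+1 * Y) by rewrite leq_mul2l h2 orbT.
have h5 : n.+1 * (n * X) <= n.+1 * (Z + k.+1 * k.+1 * X) by rewrite leq_mul2l h1 orbT.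
have h6 : n.+1 * X <= n.+1 * Y by rewrite leq_mul2l h3 orbT.
nia.
Qed.

Lemma greedy_seq (I W : finType) (w0 : W) (S : I -> {set W}) (B : {set W}) (l : seq I) :
  uniq l -> (forall i, i \in l -> #|B| + size l <= #|S i|) ->
  exists g : I -> W, {in l &, injective g} /\
    forall i, i \in l -> (g i \in S i) && (g i \notin B).
Proof.
elim: l => [|i l IH] /=.
  by move=> _ _; exists (fun _ => w0); split => // x; rewrite in_nil.
case/andP=> il ul hS.
have [|g [gi gS]] := IH ul.
  by move=> j jl; apply: leq_trans (hS j _); [rewrite addnS ltnW | rewrite inE jl orbT].
have : exists w, [&& w \in S i, w \notin B & w \notin map g l].
  apply/existsP; apply: contraT; rewrite negb_exists => /forallP H.
  have sub : S i \subset B :|: [set x in map g l].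
    by apply/subsetP => w wS; have := H w; rewrite wS /= negb_and !negbK !inE.
  have h1 := subset_leq_card sub; rewrite cardsU in h1.
  have c1 : #|[set x in map g l]| <= size l.
    by rewrite cardsE; apply: leq_trans (card_size _) _; rewrite size_map.
  have h2 := hS i (mem_head _ _); move: h1 h2 c1.
  move: #|S i| #|B| #|[set x in map g l]| (size l) #|B :&: [set x in map g l]| => a b c d e; lia.
case=> w /and3P [wS wB wg].
exists (fun j => if j == i then w else g j); split.
  move=> x y; rewrite !inE => /orP [/eqP->|xl] /orP [/eqP->|yl] //=; rewrite ?eqxx.
  - case: eqP => [->//|_] e; by move: wg; rewrite e map_f.
  - case: eqP => [e|_]; first by move: il; rewrite -e xl.
    by move=> e; move: wg; rewrite -e map_f.
  - case: eqP => [e|_]; first by move: il; rewrite -e xl.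
    case: eqP => [e|_]; first by move: il; rewrite -e yl.
    exact: gi.
move=> j; rewrite inE; case: eqP => [->|_] /=; first by rewrite wS.
exact: gS.
Qed.

Lemma greedy (I W : finType) (w0 : W) (S : I -> {set W}) (B : {set W}) :
  (forall i, #|B| + #|I| <= #|S i|) ->
  exists g : I -> W, injective g /\ forall i, (g i \in S i) && (g i \notin B).
Proof.
move=> hS; have [|g [gi gS]] := @greedy_seq I W w0 S B _ (enum_uniq I).
  by move=> i _; rewrite -cardE.
exists g; split; first by move=> x y; apply: gi; rewrite mem_enum.
by move=> i; apply: gS; rewrite mem_enum.
Qed.

Lemma sum_bool_card (I : finType) (P : pred I) :
  \sum_i (P i : nat) = #|[set i | P i]|.
Proof.
rewrite -sum1_card [in RHS]big_mkcond /=; apply: eq_bigr => i _; rewrite inE; by case: (P i).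
Qed.

Lemma exists_ge (I : finType) (i0 : I) (f : I -> nat) :
  exists x, \sum_i f i <= #|I| * f x.
Proof.
case: (@arg_maxnP I i0 xpredT f isT) => x _ H; exists x.
have H' : forall i, true -> f i <= f x by move=> i _; exact: H.
have -> : #|I| * f x = \sum_(i : I) f x by rewrite sum_nat_const.
exact: leq_sum.
Qed.

Lemma exists_le (I : finType) (i0 : I) (f : I -> nat) :
  exists x, #|I| * f x <= \sum_i f i.
Proof.
case: (@arg_minnP I i0 xpredT f isT) => x _ H; exists x.
have H' : forall i, true -> f x <= f i by move=> i _; exact: H.
have -> : #|I| * f x = \sum_(i : I) f x by rewrite sum_nat_const.
exact: leq_sum.
Qed.

Definition symm n (G : rel 'I_n) := forall x y, G x y = G y x.
Definition irrefl n (G : rel 'I_n) := forall x, ~~ G x x.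

Lemma edges2 n (G : rel 'I_n) : symm G -> irrefl G ->
  \sum_u \sum_v (G u v : nat) = 2 * #|[set p : 'I_n * 'I_n | G p.1 p.2 && (p.1 < p.2)%N]|.
Proof.
move=> sy ir.
have E : forall u v, (G u v : nat) = (G u v && (u < v)%N) + (G v u && (v < u)%N).
  move=> u v; rewrite (sy v u); case: (ltngtP u v) => [h|h|h] /=; rewrite ?andbT ?andbF ?addn0 //.
  by have := ir u; rewrite (val_inj h); case: (G v v).
rewrite (eq_bigr (fun u => \sum_v (G u v && (u < v)%N : nat) + \sum_v (G v u && (v < u)%N : nat))); last first.
  by move=> u _; rewrite -big_split; apply: eq_bigr => v _; rewrite E.
rewrite big_split /= [X in _ + X]exchange_big /= addnn -mul2n; congr (2 * _).
rewrite -sum_bool_card -(pair_big xpredT xpredT (fun u v => (G u v && (u < v)%N : nat))) /=.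
by apply: eq_bigr.
Qed.

Definition codeg n (G : rel 'I_n) u v := #|[set w | G u w && G v w]|.
Definition Gk n (G : rel 'I_n) K : rel 'I_n := fun u v => G u v && (K <= codeg G u v).
Definition tri n (G : rel 'I_n) x := \sum_y \sum_z (G x y && G x z && G y z : nat).
Definition Tr n (G : rel 'I_n) := \sum_x tri G x.

Lemma codeg_sym n (G : rel 'I_n) : symm G -> forall u v, codeg G u v = codeg G v u.
Proof. by move=> sy u v; rewrite /codeg; apply: eq_card => w; rewrite !inE andbC. Qed.

Lemma Gk_symm n (G : rel 'I_n) K : symm G -> symm (Gk G K).
Proof. by move=> sy u v; rewrite /Gk sy codeg_sym. Qed.

Lemma Gk_irrefl n (G : rel 'I_n) K : irrefl G -> irrefl (Gk G K).
Proof. by move=> ir u; rewrite /Gk negb_and ir. Qed.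

Definition bad n (G : rel 'I_n) K u v w := (G u w && G v w && (codeg G u v < K) : nat).

Lemma bad_sum n (G : rel 'I_n) K : \sum_u \sum_v \sum_w bad G K u v w <= K * n * n.
Proof.
have -> : K * n * n = \sum_(u : 'I_n) \sum_(v : 'I_n) K.
  by rewrite !big_const_ord !iter_addn_0 mulnC mulnA.
apply: leq_sum => u _; apply: leq_sum => v _.
rewrite /bad; case: (ltnP (codeg G u v) K) => h; last first.
  by rewrite big1 // => w _; rewrite andbF.
rewrite (eq_bigr (fun w => (G u w && G v w : nat))); last by move=> w _; rewrite andbT.
by rewrite sum_bool_card ltnW.
Qed.

Lemma tri_pt n (G : rel 'I_n) K : symm G -> forall x y z,
  (G x y && G x z && G y z : nat) <=
  (Gk G K x y && Gk G K x z && Gk G K y z : nat) + bad G K x y z + bad G K x z y + bad G K y z x.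
Proof.
move=> sy x y z; rewrite /Gk /bad.
rewrite (sy z y) (sy z x) (sy y x).
case: (G x y) (G x z) (G y z) => [] [] [] //=.
case: (ltnP (codeg G x y) K); case: (ltnP (codeg G x z) K); case: (ltnP (codeg G y z) K) => //=.
Qed.

Lemma Tr_Gk n (G : rel 'I_n) K : symm G -> Tr G <= Tr (Gk G K) + 3 * (K * n * n).
Proof.
move=> sy; rewrite /Tr /tri.
have h1 : \sum_x \sum_y \sum_z (G x y && G x z && G y z : nat) <=
   \sum_x \sum_y \sum_z ((Gk G K x y && Gk G K x z && Gk G K y z : nat) + bad G K x y z + bad G K x z y + bad G K y z x).
  by do 3!(apply: leq_sum => ? _); apply: tri_pt.
apply: leq_trans h1 _.
rewrite (eq_bigr (fun x => \sum_y \sum_z (Gk G K x y && Gk G K x z && Gk G K y z : nat)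
    + \sum_y \sum_z bad G K x y z + \sum_y \sum_z bad G K x z y + \sum_y \sum_z bad G K y z x)); last first.
  move=> x _; rewrite -!big_split /=; apply: eq_bigr => y _; by rewrite -!big_split.
rewrite !big_split /= -!addnA leq_add2l.
have e2 : \sum_x \sum_y \sum_z bad G K x z y = \sum_x \sum_z \sum_y bad G K x z y.
  by apply: eq_bigr => x _; rewrite exchange_big.
have e3 : \sum_x \sum_y \sum_z bad G K y z x = \sum_y \sum_z \sum_x bad G K y z x.
  rewrite exchange_big /=; apply: eq_bigr => y _; by rewrite exchange_big.
rewrite e2 e3 (_ : 3 * (K * n * n) = K * n * n + (K * n * n + K * n * n)); last by lia.
by rewrite !leq_add // bad_sum.
Qed.

Definition Nset n (H : rel 'I_n) x u := [set w | H x u && H x w && H w u].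
Definition CN n (H : rel 'I_n) x s (f : {ffun 'I_s -> 'I_n}) :=
  [set u | [forall i, f i \in Nset H x u]].

Lemma count_CN n (H : rel 'I_n) x s :
  \sum_(f : {ffun 'I_s -> 'I_n}) #|CN H x f| = \sum_u #|Nset H x u| ^ s.
Proof.
rewrite (eq_bigr (fun f : {ffun 'I_s -> 'I_n} => \sum_u ([forall i, f i \in Nset H x u] : nat))); last first.
  by move=> f _; rewrite sum_bool_card.
rewrite exchange_big /=; apply: eq_bigr => u _.
rewrite sum_bool_card; rewrite -[in RHS](card_ord s) -(card_ffun_on 'I_s (Nset H x u)).
apply: eq_card => f.
rewrite inE; apply/forallP/ffun_onP => h i; exact: h.
Qed.

Lemma sum_Nset n (H : rel 'I_n) x : symm H -> \sum_u #|Nset H x u| = tri H x.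
Proof.
move=> sy; rewrite /tri; apply: eq_bigr => u _; rewrite -sum_bool_card; apply: eq_bigr => w _.
by rewrite (sy w u).
Qed.

Lemma CN_bound n (H : rel 'I_n) x k :
  (forall f : {ffun 'I_k.+1 -> 'I_n}, injectiveb f -> #|CN H x f| <= k) ->
  \sum_(f : {ffun 'I_k.+1 -> 'I_n}) #|CN H x f| <= (k + k.+1 * k.+1) * n ^ k.+1.
Proof.
move=> hf.
have h1 : \sum_(f : {ffun 'I_k.+1 -> 'I_n}) #|CN H x f| <=
   \sum_(f : {ffun 'I_k.+1 -> 'I_n}) (k + n * (~~ injectiveb f)).
  apply: leq_sum => f _; case: (boolP (injectiveb f)) => h /=.
    by rewrite muln0 addn0 hf.
  rewrite muln1; apply: leq_trans (leq_addl _ _); apply: leq_trans (max_card _) _.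
  by rewrite card_ord.
apply: leq_trans h1 _.
rewrite big_split /= sum_nat_const -big_distrr /= sum_bool_card card_ffun !card_ord.
have c1 := card_inj_ffuns 'I_k.+1 'I_n; rewrite !card_ord in c1.
have c2 := cardsC [set f : {ffun 'I_k.+1 -> 'I_n} | injectiveb f].
rewrite card_ffun !card_ord c1 in c2.
have -> : #|[set f : {ffun 'I_k.+1 -> 'I_n} | ~~ injectiveb f]| =
          #|~: [set f : {ffun 'I_k.+1 -> 'I_n} | injectiveb f]|.
  by apply: eq_card => f; rewrite !inE.
have fb := ffact_bound n k.
have h3 : n * n ^ k = n ^ k.+1 by rewrite expnS.
move: c2 fb h3; move: (#|~: [set f : {ffun 'I_k.+1 -> 'I_n} | injectiveb f]|) (n ^_ k.+1) (n ^ k.+1) (n ^ k) => a b c d c2 fb h3.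
nia.
Qed.

Lemma build_copy (V : finType) (F : rel V) n (G : rel 'I_n) (tau : V -> option bool) x
  (f : {ffun 'I_#|V|.+1 -> 'I_n}) :
  symm G -> irrefl G ->
  (forall u v, F u v -> tau u != tau v) ->
  (forall u v, tau u = None -> tau v = None -> u = v) ->
  injective f ->
  #|V|.+1 <= #|CN (Gk G #|blowup_vertex F|) x f| ->
  contains_copy (blowup_rel F) G.
Proof.
move=> sy ir htau hnone finj hs.
set K := #|blowup_vertex F| in hs.
set H := Gk G K in hs.
have hsy : symm H := Gk_symm K sy.
have hir : irrefl H := Gk_irrefl K ir.
set C := CN H x f in hs.
pose b (i : 'I_#|V|.+1) := enum_val (widen_ord hs i).
have bC : forall i, b i \in C by move=> i; apply: enum_valP.
have binj : injective b.
  move=> i j /enum_val_inj /(congr1 val) /= e; exact: val_inj.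
have inC : forall u, u \in C -> forall i, H x u && H x (f i) && H (f i) u.
  by move=> u; rewrite inE => /forallP h i; have := h i; rewrite inE.
have Ha : forall i, H x (f i) by move=> i; have /andP[/andP[_ ->] _] := inC _ (bC ord0) i.
have Hb : forall j, H x (b j) by move=> j; have /andP[/andP[-> _] _] := inC _ (bC j) ord0.
have Hab : forall i j, H (f i) (b j) by move=> i j; have /andP[_ ->] := inC _ (bC j) i.
pose iota (v : V) : 'I_#|V|.+1 := widen_ord (leqnSn _) (enum_rank v).
have iinj : injective iota.
  move=> u v /(congr1 val) /= e; apply: enum_rank_inj; exact: val_inj.
pose phi (v : V) := match tau v with None => x | Some true => f (iota v) | Some false => b (iota v) end.
have Hphi : forall u v, tau u != tau v -> H (phi u) (phi v).
  move=> u v; rewrite /phi; case: (tau u) => [[]|]; case: (tau v) => [[]|] //= _;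
  by rewrite ?Ha ?Hb ?Hab // hsy ?Ha ?Hb ?Hab.
have phiinj : injective phi.
  move=> u v e; case: (eqVneq (tau u) (tau v)) => [ht|hn]; last first.
    by have := Hphi u v hn; rewrite e (negbTE (hir _)).
  move: e; rewrite /phi ht; case E: (tau v) => [[]|] e.
  - by apply: iinj; apply: finj.
  - by apply: iinj; apply: binj.
  - by apply: hnone; rewrite ?ht.
pose S (E : {E : {set V} | E \in edge_sets F}) := [set w | [forall z in val E, G (phi z) w]].
pose B := [set phi v | v : V].
have cK : K = #|V| + #|{: {E : {set V} | E \in edge_sets F}}| := card_sum _ _.
have hS : forall E, #|B| + #|{: {E : {set V} | E \in edge_sets F}}| <= #|S E|.
  move=> E; have := valP E; rewrite inE => /existsP [u /existsP [v /andP [Fuv /eqP eE]]].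
  have h1 := Hphi u v (htau u v Fuv).
  move: h1; rewrite /H /Gk => /andP [_ h1].
  apply: leq_trans (leq_add (leq_imset_card _ _) (leqnn _)) _.
  rewrite -cK; apply: leq_trans h1 _; apply: subset_leq_card.
  apply/subsetP => w; rewrite !inE => /andP [g1 g2]; apply/forallP => z; apply/implyP.
  by rewrite eE => /set2P [->|->].
have [g [ginj gS]] := @greedy _ _ x S B hS.
exists (fun a => match a with inl v => phi v | inr E => g E end); split.
  case=> [u|E] [v|E'] /= e.
  - by rewrite (phiinj _ _ e).
  - by have := gS E'; rewrite -e (_ : phi u \in B) ?andbF //; apply: imset_f.
  - by have := gS E; rewrite e (_ : phi v \in B) ?andbF //; apply: imset_f.
  - by rewrite (ginj _ _ e).
case=> [u|E] [v|E'] //=.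
- by move=> Fuv; have := Hphi u v (htau u v Fuv); rewrite /H /Gk => /andP [].
- move=> uE; have /andP [h _] := gS E'; move: h; rewrite inE => /forall_inP h; exact: h.
- move=> vE; have /andP [h _] := gS E; move: h; rewrite inE => /forall_inP h; rewrite sy; exact: h.
Qed.

Definition tauI (i : nat) : option bool := if i == 0 then None else Some (odd i).

Lemma tauI_step k i j : 3 <= k -> i < k -> j = i.+1 %% k -> tauI i != tauI j.
Proof.
move=> k3 ik ->; rewrite /tauI.
case: (ltngtP i.+1 k) => h.
- rewrite modn_small //=; case: (i == 0) => //=.
  by case: (odd i).
- by move: h; rewrite ltnS leqNgt ik.
- rewrite h modnn /=; have -> // : (i == 0) = false.
  by apply/eqP => i0; move: h k3; rewrite i0 => <-.
Qed.

Lemma tau_exists (V : finType) (F : rel V) :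
  (bipartite F \/ odd_cycle F) ->
  exists tau : V -> option bool, (forall u v, F u v -> tau u != tau v) /\
    (forall u v, tau u = None -> tau v = None -> u = v).
Proof.
case=> [[c hc]|[k [ok k3 [f [fb hf]]]]].
  exists (fun v => Some (c v)); split => //.
case: fb => g fg gf.
exists (fun v => tauI (g v)); split.
  move=> u v; rewrite -{1}(gf u) -{1}(gf v) hf /cycle_rel => /orP [/eqP e|/eqP e].
    exact: tauI_step k3 (ltn_ord _) e.
  by rewrite eq_sym; exact: tauI_step k3 (ltn_ord _) e.
move=> u v; rewrite /tauI; case: eqP => // hu _; case: eqP => // hv _.
by rewrite -(gf u) -(gf v); congr f; apply: val_inj; rewrite /= hu hv.
Qed.

Lemma tri_bound (V : finType) (F : rel V) : (bipartite F \/ odd_cycle F) ->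
  forall c, 0 < c -> exists N, forall n (G : rel 'I_n), N <= n -> symm G -> irrefl G ->
    ~ contains_copy (blowup_rel F) G -> c * Tr G <= n ^ 3.
Proof.
move=> /tau_exists [tau [htau hnone]] c c0.
set k := #|V|. set K := #|blowup_vertex F|.
set M := (2 * c) ^ k.+1 * (k + k.+1 * k.+1).
exists (6 * c * K + M).+1 => n G hn sy ir nocopy.
rewrite leqNgt; apply/negP => hT.
have n0 : 0 < n by apply: leq_trans hn.
set H := Gk G K.
have h1 := Tr_Gk K sy.
have [x hx] := exists_ge (Ordinal n0) (tri H).
rewrite card_ord in hx.
set T := tri H x in hx.
have h2 : n * n < 2 * c * T.
  have e1 : n ^ 3 = n * (n * n) by rewrite !expnS expn0 muln1.
  have e2 : 6 * c * K * (n * n) <= n * (n * n).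
    by rewrite leq_mul2r; apply/orP; right; apply: leq_trans (leq_addr M _) (ltnW hn).
  have e3 : c * Tr G <= c * (n * T) + c * (3 * (K * n * n)).
    by rewrite -mulnDr leq_mul2l; apply/orP; right; apply: leq_trans h1 _; rewrite leq_add2r.
  rewrite -(ltn_pmul2l n0).
  move: hT e1 e2 e3; rewrite /Tr -/H.
  move: (c * Tr G) (n ^ 3) => a b hT e1 e2 e3.
  nia.

case: (boolP [exists f : {ffun 'I_k.+1 -> 'I_n}, injectiveb f && (k.+1 <= #|CN H x f|)]).
  case/existsP => f /andP [/injectiveP finj hf].
  by case: nocopy; apply: build_copy sy ir htau hnone finj hf.
rewrite negb_exists => /forallP hf.
have hb : forall f : {ffun 'I_k.+1 -> 'I_n}, injectiveb f -> #|CN H x f| <= k.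
  by move=> f fi; have := hf f; rewrite fi /= -ltnNge ltnS.
have b1 := CN_bound hb.
rewrite count_CN in b1.
have b2 := power_mean (fun u => #|Nset H x u|) k.
rewrite card_ord sum_Nset in b2; last exact: Gk_symm.
rewrite -/T in b2.
have b3 : T ^ k.+1 <= n ^ k * ((k + k.+1 * k.+1) * n ^ k.+1).
  by apply: leq_trans b2 _; rewrite leq_mul2l b1 orbT.
have b4 : (n * n) ^ k.+1 <= (2 * c * T) ^ k.+1 by apply: expn_mono; apply: ltnW.
rewrite expnMn [X in _ <= X]expnMn in b4.
have b5 : n ^ k.+1 * n ^ k.+1 <= M * (n ^ k * n ^ k.+1).
  apply: leq_trans b4 _; rewrite /M -mulnA leq_mul2l; apply/orP; right.
  apply: leq_trans b3 _; rewrite mulnCA mulnA leqnn //.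
have b6 : n ^ k.+1 * n ^ k.+1 = n * (n ^ k * n ^ k.+1) by rewrite mulnA -expnS.
rewrite b6 leq_mul2r in b5.
have pos : 0 < n ^ k * n ^ k.+1 by rewrite muln_gt0 !expn_gt0 n0.
move: b5; rewrite eqn0Ngt pos /= => b5.
have := leq_trans hn b5; rewrite ltnNge leq_addl //.
Qed.

Definition deg n (G : rel 'I_n) v := \sum_w (G v w : nat).
Definition Sx n (G : rel 'I_n) x := \sum_v (~~ G x v) * deg G v.
Definition Gcut n (G : rel 'I_n) x : rel 'I_n := fun u v => G u v && (G x u != G x v).

Lemma Gcut_symm n (G : rel 'I_n) x : symm G -> symm (Gcut G x).
Proof. by move=> sy u v; rewrite /Gcut sy eq_sym. Qed.

Lemma Gcut_irrefl n (G : rel 'I_n) x : irrefl G -> irrefl (Gcut G x).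
Proof. by move=> ir u; rewrite /Gcut negb_and ir. Qed.

Lemma stab_identity n (G : rel 'I_n) x : symm G -> irrefl G ->
  num_edges G - num_edges (Gcut G x) + num_edges G = tri G x + Sx G x.
Proof.
move=> sy ir.
have E1 := edges2 sy ir.
have E2 := edges2 (Gcut_symm x sy) (Gcut_irrefl x ir).
rewrite -/(num_edges G) in E1; rewrite -/(num_edges (Gcut G x)) in E2.
pose oA u v := (G u v && G x u && G x v : nat).
pose oB u v := (G u v && ~~ G x u && ~~ G x v : nat).
pose oAB u v := (G u v && G x u && ~~ G x v : nat).
pose oBA u v := (G u v && ~~ G x u && G x v : nat).
have P1 : \sum_u \sum_v (G u v : nat) = \sum_u \sum_v oA u v + \sum_u \sum_v oB u v
    + \sum_u \sum_v oAB u v + \sum_u \sum_v oBA u v.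
  rewrite -!big_split /=; apply: eq_bigr => u _; rewrite -!big_split /=; apply: eq_bigr => v _.
  by rewrite /oA /oB /oAB /oBA; case: (G u v) (G x u) (G x v) => [] [] [].
have P2 : \sum_u \sum_v (Gcut G x u v : nat) = \sum_u \sum_v oAB u v + \sum_u \sum_v oBA u v.
  rewrite -!big_split /=; apply: eq_bigr => u _; rewrite -!big_split /=; apply: eq_bigr => v _.
  by rewrite /Gcut /oAB /oBA; case: (G u v) (G x u) (G x v) => [] [] [].
have P3 : \sum_u \sum_v oAB u v = \sum_u \sum_v oBA u v.
  rewrite exchange_big /=; apply: eq_bigr => u _; apply: eq_bigr => v _.
  by rewrite /oAB /oBA sy andbAC.
have P4 : tri G x = \sum_u \sum_v oA u v.
  apply: eq_bigr => u _; apply: eq_bigr => v _.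
  by rewrite /oA; case: (G u v) (G x u) (G x v) => [] [] [].
have P5 : Sx G x = \sum_u \sum_v oB u v + \sum_u \sum_v oBA u v.
  rewrite /Sx -big_split /=; apply: eq_bigr => u _; rewrite /deg big_distrr -big_split /=.
  apply: eq_bigr => v _.
  by rewrite /oB /oBA; case: (G u v) (G x u) (G x v) => [] [] [].
move: E1 E2 P1 P2 P3 P4 P5.
move: (\sum_u \sum_v (G u v : nat)) (\sum_u \sum_v (Gcut G x u v : nat)) (\sum_u \sum_v oA u v)
  (\sum_u \sum_v oB u v) (\sum_u \sum_v oAB u v) (\sum_u \sum_v oBA u v) => a b c d e f.
move=> h1 h2 h3 h4 h5 h6 h7.
move: (num_edges G) (num_edges (Gcut G x)) (tri G x) (Sx G x) h1 h2 h3 h4 h5 h6 h7 => p q r s h1 h2 h3 h4 h5 h6 h7; clear -h1 h2 h3 h4 h5 h6 h7; lia.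
Qed.

Lemma deg_le n (G : rel 'I_n) v : deg G v <= n.
Proof.
rewrite /deg; apply: leq_trans (_ : \sum_(w : 'I_n) 1 <= n).
  by apply: leq_sum => w _; case: (G v w).
by rewrite big_const_ord iter_addn_0 mul1n.
Qed.

Lemma sum_Sx n (G : rel 'I_n) : symm G ->
  \sum_x Sx G x = \sum_v deg G v * (n - deg G v).
Proof.
move=> sy; rewrite /Sx exchange_big /=; apply: eq_bigr => v _.
rewrite -big_distrl /= mulnC; congr (_ * _).
have h : \sum_(x < n) (~~ G x v : nat) + \sum_(x < n) (G x v : nat) = n.
  rewrite -big_split /= (eq_bigr (fun _ => 1)); last by move=> i _; case: (G i v).
  by rewrite big_const_ord iter_addn_0 mul1n.
have h2 : \sum_(x < n) (G x v : nat) = deg G v by apply: eq_bigr => i _; rewrite sy.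
apply/eqP; rewrite -(eqn_add2r (deg G v)) subnK ?deg_le // -h2; apply/eqP; exact: h.
Qed.

Lemma stab_main n (G : rel 'I_n) : 0 < n -> symm G -> irrefl G -> exists x,
  4 * (n * n) * (num_edges G - num_edges (Gcut G x)) + 4 * (n * n) * num_edges G
    <= 4 * n * Tr G + (n * n) * (n * n).
Proof.
move=> n0 sy ir.
have [x hx] := exists_le (Ordinal n0) (fun x => tri G x + Sx G x).
exists x; rewrite card_ord big_split /= sum_Sx // -/(Tr G) in hx.
have id := stab_identity x sy ir.
have E1 := edges2 sy ir; rewrite -/(num_edges G) in E1.
have Q1 : \sum_v deg G v * (n - deg G v) + \sum_v deg G v ^ 2 = n * \sum_v deg G v.
  rewrite -big_split big_distrr /=; apply: eq_bigr => v _.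
  have := deg_le G v; move: (deg G v) => d hd.
  rewrite expnS expn1 -mulnDr subnK //; exact: mulnC.
have C := power_mean (deg G) 1.
rewrite card_ord expn1 in C.
rewrite -id in hx.
have E1' : \sum_v deg G v = 2 * num_edges G := E1.
have C' : (\sum_v deg G v) ^ 2 <= n * \sum_v deg G v ^ 2 := C.
clear E1 C id.
move: hx Q1 C' E1'.
move: (num_edges G - num_edges (Gcut G x)) => r.
move: (num_edges G) (Tr G) (\sum_v deg G v * (n - deg G v))
  (\sum_v deg G v ^ 2) (\sum_v deg G v) => e T Q D2 P hx Q1 C E1.
have s1 : 4 * n * (n * (r + e)) <= 4 * n * (T + Q) by rewrite leq_mul2l hx orbT.
have s2 : n * Q + n * D2 = n * (n * P) by rewrite -Q1 mulnDr.
have s3 : P * P <= n * D2 by move: C; rewrite expnS expn1.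
have h5 : 8 * (n * n) * e <= (n * n) * (n * n) + 16 * (e * e).
  clear; move: (n * n) => m.
  case: (leqP (4 * e) m) => h.
    rewrite -(subnK h); move: (m - 4 * e) => d; nia.
  have h' : m <= 4 * e by apply: ltnW.
  have E := subnK h'; move: (4 * e - m) E => d E; nia.
rewrite E1 in s2 s3.
move: s1 s2 s3 h5; move: (n * Q) (n * D2) => nQ nD s1 s2 s3 h5.
nia.
Qed.
Local Open Scope ring_scope.
Lemma real_part1 (R : realType) (N E Rr T C d : R) : 0 < N -> 0 <= T -> 0 < d ->
  4 * (N * N) * Rr + 4 * (N * N) * E <= 4 * N * T + N * N * (N * N) ->
  C * T <= N ^+ 3 -> N ^+ 2 / 4 - d / 2 * N ^+ 2 <= E -> d^-1 * 2 < C -> Rr <= d * N ^+ 2.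
Proof.
move=> N0 T0 d0 h1 h2 h3 h4.
rewrite exprS expr2 in h2.
have a1 : 2 < C * d by rewrite -ltr_pdivrMr // mulrC.
have a2 : 2 * T <= d * (N * (N * N)).
  have : 2 * T <= (C * d) * T by rewrite ler_wpM2r // ltW.
  have : d * (C * T) <= d * (N * (N * N)) by rewrite ler_wpM2l // ltW.
  move=> b1 b2; apply: le_trans b2 _; rewrite (mulrC C) -mulrA; exact: b1.
have a3 : 4 * (N * N) * E >= N * N * (N * N) - 2 * d * (N * N * (N * N)).
  have : 0 <= 4 * (N * N) by apply: mulr_ge0 => //; apply: mulr_ge0; apply: ltW.
  move=> p; have := ler_wpM2l p h3.
  have e : 4 * (N * N) * (N ^+ 2 / 4 - d / 2 * N ^+ 2) = N * N * (N * N) - 2 * d * (N * N * (N * N)).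
    by field.
  by rewrite e.
have a4 : 4 * (N * N) * Rr <= 4 * (N * N) * (d * (N * N)).
  have : 4 * N * T <= 2 * N * (d * (N * (N * N))).
    have := ler_wpM2l (ltW (mulr_gt0 (ltr0n R 2) N0)) a2.
    have e : 2 * N * (2 * T) = 4 * N * T by ring.
    by rewrite e.
  move=> b; lra.
rewrite expr2; move: a4; rewrite ler_pM2l //; apply: mulr_gt0 => //; exact: mulr_gt0.
Qed.

Lemma real_part2 (R : realType) (N E Rr T C d : R) : 0 < N -> 0 <= T -> 0 < d -> 0 <= Rr ->
  4 * (N * N) * Rr + 4 * (N * N) * E <= 4 * N * T + N * N * (N * N) ->
  C * T <= N ^+ 3 -> d^-1 < C -> E <= N ^+ 2 / 4 + d * N ^+ 2.
Proof.
move=> N0 T0 d0 R0 h1 h2 h4.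
rewrite exprS expr2 in h2.
have a1 : 1 < C * d by rewrite -ltr_pdivrMr // div1r.
have a2 : T <= d * (N * (N * N)).
  have b2 : T <= (C * d) * T by rewrite ler_peMl // ltW.
  have b1 : d * (C * T) <= d * (N * (N * N)) by rewrite ler_wpM2l // ltW.
  apply: le_trans b2 _; have -> : C * d * T = d * (C * T) by ring.
  exact: b1.
have a3 : 0 <= 4 * (N * N) * Rr by apply: mulr_ge0 => //; apply: mulr_ge0 => //; apply: mulr_ge0; apply: ltW.
have a4 : 4 * N * T <= 4 * N * (d * (N * (N * N))).
  by rewrite ler_wpM2l //; apply: mulr_ge0 => //; apply: ltW.
have a5 : 4 * (N * N) * E <= 4 * (N * N) * (N ^+ 2 / 4 + d * N ^+ 2).
  have e : 4 * (N * N) * (N ^+ 2 / 4 + d * N ^+ 2) = N * N * (N * N) + 4 * N * (d * (N * (N * N))).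
    by field.
  rewrite e; lra.
move: a5; rewrite ler_pM2l //; apply: mulr_gt0 => //; exact: mulr_gt0.
Qed.

Lemma get_c (R : realType) (x : R) : 0 < x -> exists c : nat, (0 < c)%N /\ x < c%:R.
Proof.
move=> x0; exists (Num.Def.archi_bound x); have h := archi_boundP (ltW x0).
by split => //; rewrite -(ltr0n R); apply: lt_trans h.
Qed.

Unset Implicit Arguments.

Theorem proposition2p9 (R : realType) (V : finType) (F : rel V) :
  simple_graph F -> (bipartite F \/ odd_cycle F) ->
  (forall delta : R, 0 < delta ->
    exists eps : R, 0 < eps /\
      exists N : nat, forall (n : nat) (G : rel 'I_n), (N <= n)%N ->
        simple_graph G ->
        ~ contains_copy (blowup_rel F) G ->
        (n%:R ^+ 2 / 4 - eps * n%:R ^+ 2 <= (num_edges G)%:R) ->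
        exists G' : rel 'I_n,
          (forall x y, G' x y -> G x y) /\ simple_graph G' /\ bipartite G' /\
          ((num_edges G - num_edges G')%:R <= delta * n%:R ^+ 2))
  /\
  (forall eta : R, 0 < eta ->
    exists N : nat, forall (n : nat) (G : rel 'I_n), (N <= n)%N ->
      simple_graph G ->
      ~ contains_copy (blowup_rel F) G ->
      (num_edges G)%:R <= n%:R ^+ 2 / 4 + eta * n%:R ^+ 2).
Proof.
move=> _ hF; have TB := tri_bound hF.
split.
- move=> delta d0.
  have xp : 0 < delta^-1 * 2 by rewrite mulr_gt0 // invr_gt0.
  have [c [c0 hc]] := get_c xp.
  have [N hN] := TB c c0.
  exists (delta / 2); split; first by apply: divr_gt0.
  exists (maxn N 1) => n G hn [sy ir] nocopy he.
  have n0 : (0 < n)%N by apply: leq_trans hn; rewrite leq_maxr.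
  have hT := hN n G (leq_trans (leq_maxl _ _) hn) sy ir nocopy.
  have [x hx] := stab_main n0 sy ir.
  exists (Gcut G x); split; first by move=> u v /andP [].
  split; first by split; [exact: Gcut_symm | exact: Gcut_irrefl].
  split; first by exists (G x) => u v /andP [].
  move: hx; rewrite -(ler_nat R) !natrD !natrM => hx.
  move: hT; rewrite -(ler_nat R) natrM natrX => hT.
  apply: (real_part1 (E := (num_edges G)%:R) (T := (Tr G)%:R) (C := c%:R)) => //.
  by rewrite ltr0n.
- move=> eta e0.
  have xp : 0 < eta^-1 by rewrite invr_gt0.
  have [c [c0 hc]] := get_c xp.
  have [N hN] := TB c c0.
  exists (maxn N 1) => n G hn [sy ir] nocopy.
  have n0 : (0 < n)%N by apply: leq_trans hn; rewrite leq_maxr.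
  have hT := hN n G (leq_trans (leq_maxl _ _) hn) sy ir nocopy.
  have [x hx] := stab_main n0 sy ir.
  move: hx; rewrite -(ler_nat R) !natrD !natrM => hx.
  move: hT; rewrite -(ler_nat R) natrM natrX => hT.
  apply: (real_part2 (Rr := (num_edges G - num_edges (Gcut G x))%:R) (T := (Tr G)%:R) (C := c%:R)) => //.
  by rewrite ltr0n.
Qed.
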